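(* Fix $m\ge 1$, $n\ge 0$, and let $\mathsf{G3Ldm}_{n}^{m}+\mathsf{PR}$ be the calculus $\mathsf{G3Ldm}_{n}^{m}$ extended with the propagation rules $(\mathsf{Pr}_i)$ for all $i\in Ag$ (see context). Then: (i) all sequents of the form $\mathcal{R}, w:\phi, w:\overline{\phi},\Gamma$ are derivable; (ii) substitution of labels is height-preserving admissible; (iii) all inference rules are height-preserving invertible; (iv) the rules $(\mathsf{wk})$: from $\mathcal{R},\Gamma$ infer $\mathcal{R},\mathcal{R}',\Gamma',\Gamma$; $(\mathsf{ctr})_{\mathsf{R}}$: from $\mathcal{R},\mathcal{R}',\mathcal{R}',\Gamma$ infer $\mathcal{R},\mathcal{R}',\Gamma$; and $(\mathsf{ctr})_{\mathsf{F}}$: from $\mathcal{R},\Gamma',\Gamma',\Gamma$ infer $\mathcal{R},\Gamma',\Gamma$ are height-preserving admissible.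
   Context: Language. $Ag=\{1,\dots,m\}$, $Var$ a countable set of propositional variables; formulas $\phi ::= p \mid \overline{p} \mid (\phi\wedge\phi) \mid (\phi\vee\phi) \mid \Box\phi \mid \Diamond\phi \mid [i]\phi \mid \langle i\rangle\phi$. $\overline{\phi}$ is obtained by swapping $p/\overline{p}$, $\wedge/\vee$, $\Box/\Diamond$, $[i]/\langle i\rangle$. Labelled sequents $\mathcal{R},\Gamma$: $\mathcal{R}$ a multiset of relational atoms $\mathcal{R}_ixy$ ($i\in Ag$, $x,y$ labels), $\Gamma$ a multiset of labelled formulas $x:\phi$. Derivations are finite trees whose leaves are $(\mathsf{id})$ instances; height = length of longest branch. Height-preserving admissibility of a rule means: if its premise is derivable with height $\le h$, so is its conclusion. Height-preserving invertibility means: if a conclusion of an instance is derivable with height $\le h$, so is each premise. Substitution admissibility: if $\Lambda$ is derivable with height $\le h$ then so is $\Lambda(y/x)$. Rules of $\mathsf{G3Ldm}_{n}^{m}$ (premise(s) / conclusion): $(\mathsf{id})$: / $\mathcal{R}, w:p, w:\overline{p},\Gamma$. $(\wedge)$: $\mathcal{R}, w:\phi\wedge\psi, w:\phi,\Gamma$ and $\mathcal{R}, w:\phi\wedge\psi, w:\psi,\Gamma$ / $\mathcal{R}, w:\phi\wedge\psi,\Gamma$. $(\vee)$: $\mathcal{R}, w:\phi\vee\psi, w:\phi, w:\psi,\Gamma$ / $\mathcal{R}, w:\phi\vee\psi,\Gamma$. $([i])$: $\mathcal{R},\mathcal{R}_iwv, v:\phi,\Gamma$ / $\mathcal{R}, w:[i]\phi,\Gamma$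 ($v$ fresh). $(\Box)$: $\mathcal{R}, w:\Box\phi, v:\phi,\Gamma$ / $\mathcal{R}, w:\Box\phi,\Gamma$ ($v$ fresh). $(\Diamond)$: $\mathcal{R}, w:\Diamond\phi, u:\phi,\Gamma$ / $\mathcal{R}, w:\Diamond\phi,\Gamma$. $(\mathsf{IOA})$: $\mathcal{R},\mathcal{R}_1u_1v,\dots,\mathcal{R}_mu_mv,\Gamma$ / $\mathcal{R},\Gamma$ ($v$ fresh). $(\langle i\rangle)$: $\mathcal{R},\mathcal{R}_iwu, w:\langle i\rangle\phi, u:\phi,\Gamma$ / $\mathcal{R},\mathcal{R}_iwu, w:\langle i\rangle\phi,\Gamma$. $(\mathsf{refl}_i)$: $\mathcal{R},\mathcal{R}_iww,\Gamma$ / $\mathcal{R},\Gamma$. $(\mathsf{eucl}_i)$: $\mathcal{R},\mathcal{R}_iwu,\mathcal{R}_iwv,\mathcal{R}_iuv,\Gamma$ / $\mathcal{R},\mathcal{R}_iwu,\mathcal{R}_iwv,\Gamma$. $(\mathsf{APC}^i_n)$ (only if $n>0$): premises $\mathcal{R},\mathcal{R}_iw_kw_j,\Gamma$ for all $0\le k\le n-1$, $k+1\le j\le n$ / $\mathcal{R},\Gamma$. ''Fresh'' means not occurring in the conclusion. One copy of the indexed rules for each $i\in Ag$. Propagation rule $(\mathsf{Pr}_i)$: $\mathcal{R}, w:\langle i\rangle\phi, u:\phi,\Gamma$ / $\mathcal{R}, w:\langle i\rangle\phi,\Gamma$, applicable only if $w=u$ or there are labels $w=z_0,z_1,\dots,z_k=u$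 ($k\ge1$) such that for each $l<k$, $\mathcal{R}_iz_lz_{l+1}\in\mathcal{R}$ or $\mathcal{R}_iz_{l+1}z_l\in\mathcal{R}$. (This is the condition that the propagation automaton of the sequent from $w$ to $u$, whose transitions in both directions are given by the $\mathcal{R}_i$-atoms, accepts a string in the language $\langle i\rangle^*$.) *)

(* Defs.v *)
From mathcomp Require Import ssreflect ssrbool eqtype ssrnat seq fintype.
From Stdlib Require Import List Permutation Relations.

Definition label := nat.
Definition pvar := nat.

(* Agents: Ag = {1,...,m} is represented by 'I_m (ordinal k stands for agent k+1). *)
Inductive form (m : nat) : Type :=
| Var  : pvar -> form m
| NVar : pvar -> form m
| And  : form m -> form m -> form m
| Or   : form m -> form m -> form m
| Box  : form m -> form m
| Dia  : form m -> form m
| Stit : 'I_m -> form m -> form m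
| DStit : 'I_m -> form m -> form m.
Arguments Var {m}. Arguments NVar {m}. Arguments And {m}. Arguments Or {m}.
Arguments Box {m}. Arguments Dia {m}. Arguments Stit {m}. Arguments DStit {m}.

Fixpoint neg {m} (f : form m) : form m :=
  match f with
  | Var p => NVar p
  | NVar p => Var p
  | And a b => Or (neg a) (neg b)
  | Or a b => And (neg a) (neg b)
  | Box a => Dia (neg a)
  | Dia a => Box (neg a)
  | Stit i a => DStit i (neg a)
  | DStit i a => Stit i (neg a)
  end.

Record ratom (m : nat) := RA { ra_ag : 'I_m; ra_src : label; ra_tgt : label }.
Arguments RA {m}. Arguments ra_ag {m}. Arguments ra_src {m}. Arguments ra_tgt {m}.

Definition lform (m : nat) := (label * form m)%type.

(* A labelled sequent R, Gamma: two lists, read as multisets (see seq_equiv). *)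
Definition sequent (m : nat) := (list (ratom m) * list (lform m))%type.

Definition seq_equiv {m} (S T : sequent m) : Prop :=
  Permutation (fst S) (fst T) /\ Permutation (snd S) (snd T).

Definition labels {m} (S : sequent m) : list label :=
  flat_map (fun a => ra_src a :: ra_tgt a :: nil) (fst S) ++ List.map fst (snd S).

Definition fresh {m} (v : label) (S : sequent m) : Prop := ~ In v (labels S).

(* Condition of the propagation rule (Pr_i): w = u or a chain of R_i-atoms of R
   (in either direction) from w to u, i.e. reflexive-transitive closure. *)
Definition ag_edge {m} (i : 'I_m) (R : list (ratom m)) (x y : label) : Prop :=
  In (RA i x y) R \/ In (RA i y x) R.

Definition prop_path {m} (i : 'I_m) (R : list (ratom m)) (w u : label) : Prop :=
  clos_refl_trans label (ag_edge i R) w u.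

Definition apc_pairs (n : nat) : list (nat * nat) :=
  flat_map (fun k => List.map (fun j => (k, j)) (List.seq (S k) (n - k))) (List.seq 0 n).

Inductive rule (m n : nat) : list (sequent m) -> sequent m -> Prop :=
| r_id : forall R w p G,
    rule m n nil (R, (w, Var p) :: (w, NVar p) :: G)
| r_and : forall R w a b G,
    rule m n ((R, (w, And a b) :: (w, a) :: G) :: (R, (w, And a b) :: (w, b) :: G) :: nil)
             (R, (w, And a b) :: G)
| r_or : forall R w a b G,
    rule m n ((R, (w, Or a b) :: (w, a) :: (w, b) :: G) :: nil) (R, (w, Or a b) :: G)
| r_stit : forall (i : 'I_m) R w v a G,
    fresh v (R, (w, Stit i a) :: G) ->
    rule m n ((RA i w v :: R, (v, a) :: G) :: nil) (R, (w, Stit i a) :: G)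
| r_box : forall R w v a G,
    fresh v (R, (w, Box a) :: G) ->
    rule m n ((R, (w, Box a) :: (v, a) :: G) :: nil) (R, (w, Box a) :: G)
| r_dia : forall R w u a G,
    rule m n ((R, (w, Dia a) :: (u, a) :: G) :: nil) (R, (w, Dia a) :: G)
| r_ioa : forall R G (u : 'I_m -> label) v,
    fresh v (R, G) ->
    rule m n ((List.map (fun i => RA i (u i) v) (enum 'I_m) ++ R, G) :: nil) (R, G)
| r_dstit : forall (i : 'I_m) R w u a G,
    rule m n ((RA i w u :: R, (w, DStit i a) :: (u, a) :: G) :: nil)
             (RA i w u :: R, (w, DStit i a) :: G)
| r_refl : forall (i : 'I_m) R w G,
    rule m n ((RA i w w :: R, G) :: nil) (R, G)
| r_eucl : forall (i : 'I_m) R w u v G,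
    rule m n ((RA i w u :: RA i w v :: RA i u v :: R, G) :: nil)
             (RA i w u :: RA i w v :: R, G)
| r_apc : forall (i : 'I_m) R G (w : nat -> label),
    0 < n ->
    rule m n (List.map (fun kj => (RA i (w (fst kj)) (w (snd kj)) :: R, G)) (apc_pairs n))
             (R, G)
| r_pr : forall (i : 'I_m) R w u a G,
    prop_path i R w u ->
    rule m n ((R, (w, DStit i a) :: (u, a) :: G) :: nil) (R, (w, DStit i a) :: G).

(* der m n h S : S is derivable in G3Ldm_n^m + PR with a derivation of height <= h
   (height counted as the number of nodes on the longest branch; an (id) leaf
   has height 1).  Sequents are identified up to multiset equality. *)
Inductive der (m n : nat) : nat -> sequent m -> Prop :=
| der_rule : forall (h : nat) (P : list (sequent m)) (C Sq : sequent m),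
    rule m n P C -> seq_equiv Sq C ->
    (forall Q, In Q P -> der m n h Q) ->
    der m n h.+1 Sq.

Definition subst_label (y x z : label) : label := if Nat.eqb z x then y else z.

Definition subst_seq {m} (y x : label) (S : sequent m) : sequent m :=
  (List.map (fun a => RA (ra_ag a) (subst_label y x (ra_src a)) (subst_label y x (ra_tgt a))) (fst S),
   List.map (fun lf => (subst_label y x (fst lf), snd lf)) (snd S)).

(* Main.v *)
Require Import Defs.
From mathcomp Require Import ssreflect ssrbool eqtype ssrnat seq fintype.
From Stdlib Require Import List Permutation Relations Lia PeanoNat.
Arguments Permutation {A} (_ _)%_list_scope.
Local Notation "x ++ y" := (app x y) : seq_scope.

Lemma pf_front {A} (x : A) L' R R' : Permutation R (x :: R') -> Permutation L' R' -> Permutation (x :: L') R.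
Proof. intros H1 H2. eapply Permutation_trans; [apply perm_skip; exact H2| apply Permutation_sym; exact H1]. Qed.
Lemma pf_front_app {A} (L1 L2 R R' : list A) : Permutation R (L1 ++ R') -> Permutation L2 R' -> Permutation (L1 ++ L2) R.
Proof. intros H1 H2. eapply Permutation_trans; [apply Permutation_app_head; exact H2| apply Permutation_sym; exact H1]. Qed.
Lemma pf_L1 {A} (x y : A) r r' : Permutation r (x :: r') -> Permutation (y :: r) (x :: y :: r').
Proof. intros H. eapply Permutation_trans; [apply perm_skip; exact H| apply perm_swap]. Qed.
Lemma pf_L2 {A} (x : A) r1 r2 r' : Permutation r1 (x :: r') -> Permutation (r1 ++ r2) (x :: r' ++ r2).
Proof. intros H. exact (Permutation_app_tail r2 H). Qed.
Lemma pf_L3 {A} (x : A) r1 r2 r' : Permutation r2 (x :: r') -> Permutation (r1 ++ r2) (x :: r1 ++ r').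
Proof. intros H. eapply Permutation_trans; [apply Permutation_app_head; exact H|]. apply Permutation_sym, Permutation_middle. Qed.
Lemma pf_M0 {A} (L : list A) : Permutation L (L ++ nil).
Proof. induction L as [|a L IH]; [apply perm_nil| apply perm_skip; exact IH]. Qed.
Lemma pf_M1 {A} (L : list A) y r r' : Permutation r (L ++ r') -> Permutation (y :: r) (L ++ y :: r').
Proof. intros H. eapply Permutation_trans; [apply perm_skip; exact H|]. apply Permutation_middle. Qed.
Lemma pf_M2 {A} (L r1 r2 r' : list A) : Permutation r1 (L ++ r') -> Permutation (r1 ++ r2) (L ++ r' ++ r2).
Proof. intros H. rewrite app_assoc. apply Permutation_app_tail; exact H. Qed.
Lemma pf_M3 {A} (L r1 r2 r' : list A) : Permutation r2 (L ++ r') -> Permutation (r1 ++ r2) (L ++ r1 ++ r').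
Proof. intros H. eapply Permutation_trans; [apply Permutation_app_head; exact H|].
  rewrite !app_assoc. apply Permutation_app_tail, Permutation_app_comm. Qed.

Lemma pf_var {A} (L R R' : list A) : Permutation R (L ++ R') -> Permutation nil R' -> Permutation L R.
Proof. intros H1 H2. apply Permutation_nil in H2. subst R'. apply Permutation_sym. rewrite app_nil_r in H1. exact H1. Qed.

Ltac mf x :=
  lazymatch goal with
  | |- Permutation (?y :: _) _ =>
      tryif unify y x then apply Permutation_refl
      else (apply pf_L1; mf x)
  | |- Permutation (_ ++ _) _ =>
      first [ apply pf_L2; mf x | apply pf_L3; mf x ]
  end.

Ltac mfl L :=
  lazymatch goal with
  | |- Permutation ?r _ =>
    tryif unify r L then apply pf_M0 else
    lazymatch r with
    | ?r1 ++ _ => tryif unify r1 L then apply Permutation_refl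
                  else first [ apply pf_M2; mfl L | apply pf_M3; mfl L ]
    | _ :: _ => apply pf_M1; mfl L
    end
  end.

Ltac perm_solve :=
  simpl; rewrite -?app_assoc; simpl;
  lazymatch goal with
  | |- Permutation nil _ => apply Permutation_refl
  | |- Permutation (?x :: _) _ => eapply pf_front; [mf x | perm_solve]
  | |- Permutation (?L1 ++ _) _ => eapply pf_front_app; [mfl L1 | perm_solve]
  | |- Permutation ?L _ => first [apply Permutation_refl | eapply pf_var; [mfl L | perm_solve]]
  end.

Lemma der_perm m n h S T : der m n h S -> seq_equiv S T -> der m n h T.
Proof.
  intros D [H1 H2]. destruct D as [h P C Sq Hr [E1 E2] Hp].
  eapply der_rule; [exact Hr| |exact Hp].
  split; (eapply Permutation_trans; [apply Permutation_sym; eassumption| eassumption]).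
Qed.

Lemma der_pos m n h Sq : der m n h Sq -> exists h', h = S h'.
Proof. intros D. destruct D. eauto. Qed.

Lemma der_mono m n h S : der m n h S -> forall h', le h h' -> der m n h' S.
Proof.
  intros D. induction D as [h P C Sq Hr He Hp IH]; intros h' Hle.
  destruct h' as [|h']; [lia|].
  eapply der_rule; [exact Hr|exact He|]. intros Q HQ. apply IH; [exact HQ| lia].
Qed.

Lemma step_rule m n h P C Sq : rule m n P C -> seq_equiv Sq C -> (forall Q, In Q P -> der m n h Q) -> der m n (S h) Sq.
Proof. intros. eapply der_rule; eauto. Qed.
Arguments der_pos {m n h Sq}. Arguments der_mono {m n h S}. Arguments der_perm {m n h S T}.

Lemma fresh_ex (L : list nat) : exists z, ~ In z L.
Proof.
  assert (H : forall x, In x L -> le x (fold_right Nat.add 0 L)).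
  { induction L as [|a L IH]; simpl; intros x Hx; [contradiction|]. destruct Hx as [<-|Hx]; [lia|].
    specialize (IH x Hx). lia. }
  exists (S (fold_right Nat.add 0 L)). intros Hin. specialize (H _ Hin). lia.
Qed.

Definition mapR {m} (f : label -> label) (R : list (ratom m)) : list (ratom m) :=
  List.map (fun a => RA (ra_ag a) (f (ra_src a)) (f (ra_tgt a))) R.
Definition mapG {m} (f : label -> label) (G : list (lform m)) : list (lform m) :=
  List.map (fun lf => (f (fst lf), snd lf)) G.
Definition mapS {m} f (S : sequent m) : sequent m := (mapR f (fst S), mapG f (snd S)).
Definition inst {m} (A : sequent m) R G : sequent m := (fst A ++ R, snd A ++ G).
Definition upd (f : label -> label) (e z : label) : label -> label :=
  fun l => if Nat.eqb l e then z else f l.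

Lemma mapR_app {m} f (R1 R2 : list (ratom m)) : mapR f (R1 ++ R2) = mapR f R1 ++ mapR f R2.
Proof. apply map_app. Qed.
Lemma mapG_app {m} f (G1 G2 : list (lform m)) : mapG f (G1 ++ G2) = mapG f G1 ++ mapG f G2.
Proof. apply map_app. Qed.
Lemma mapR_id {m} (R : list (ratom m)) : mapR (fun x => x) R = R.
Proof. induction R as [|[i a b] R IH]; simpl; [reflexivity| rewrite IH; reflexivity]. Qed.
Lemma mapG_id {m} (G : list (lform m)) : mapG (fun x => x) G = G.
Proof. induction G as [|[a b] G IH]; simpl; [reflexivity| rewrite IH; reflexivity]. Qed.

Lemma labels_app {m} (X R : list (ratom m)) (Y G : list (lform m)) l :
  In l (labels (X ++ R, Y ++ G)) <-> In l (labels (X, Y)) \/ In l (labels (R, G)).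
Proof.
  unfold labels; simpl. rewrite flat_map_app map_app !in_app_iff. tauto.
Qed.

Lemma labels_perm {m} (S T : sequent m) l : seq_equiv S T -> In l (labels S) -> In l (labels T).
Proof.
  destruct S as [R G], T as [R' G']. intros [H1 H2]. unfold labels; simpl in *.
  rewrite !in_app_iff. intros [H|H]; [left|right].
  - eapply Permutation_in; [|exact H]. apply Permutation_flat_map. exact H1.
  - eapply Permutation_in; [|exact H]. apply Permutation_map. exact H2.
Qed.

Lemma fresh_iff {m} v (S : sequent m) :
  fresh v S <-> (forall a, In a (fst S) -> ra_src a <> v /\ ra_tgt a <> v) /\ (forall x, In x (snd S) -> fst x <> v).
Proof.
  destruct S as [R G]. unfold fresh, labels; simpl. rewrite in_app_iff in_flat_map in_map_iff. split.
  - intros H. split.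
    + intros a Ha. split; intros E; apply H; left; exists a; (split; [exact Ha| simpl; auto]).
    + intros x Hx E. apply H. right. exists x. auto.
  - intros [H1 H2] [[a [Ha Hin]]|[x [E Hx]]].
    + destruct (H1 a Ha) as [E1 E2]. simpl in Hin. destruct Hin as [E|[E|[]]]; auto.
    + exact (H2 x Hx E).
Qed.

Lemma mapR_fresh {m} f e z (R : list (ratom m)) G : fresh e (R, G) -> mapR (upd f e z) R = mapR f R.
Proof.
  intros Hf. apply fresh_iff in Hf. destruct Hf as [H1 _]. simpl in H1.
  apply map_ext_in. intros a Ha. destruct (H1 a Ha) as [E1 E2]. unfold upd.
  apply Nat.eqb_neq in E1, E2. rewrite E1 E2. reflexivity.
Qed.
Lemma mapG_fresh {m} f e z (R : list (ratom m)) G : fresh e (R, G) -> mapG (upd f e z) G = mapG f G.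
Proof.
  intros Hf. apply fresh_iff in Hf. destruct Hf as [_ H2]. simpl in H2.
  apply map_ext_in. intros a Ha. unfold upd. specialize (H2 a Ha). apply Nat.eqb_neq in H2. rewrite H2. reflexivity.
Qed.

Lemma fresh_sub {m} v (S T : sequent m) : (forall l, In l (labels S) -> In l (labels T)) -> fresh v T -> fresh v S.
Proof. unfold fresh. auto. Qed.

Lemma prop_path_mono {m} (i : 'I_m) R R' w u : prop_path i R w u -> incl R R' -> prop_path i R' w u.
Proof.
  intros H Hi. induction H as [x y Hxy|x|x y z _ IH1 _ IH2].
  - apply rt_step. destruct Hxy as [H|H]; [left|right]; apply Hi; exact H.
  - apply rt_refl.
  - eapply rt_trans; eauto.
Qed.

Lemma prop_path_map {m} (i : 'I_m) R w u f : prop_path i R w u -> prop_path i (mapR f R) (f w) (f u).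
Proof.
  intros H. induction H as [x y Hxy|x|x y z _ IH1 _ IH2].
  - apply rt_step. unfold ag_edge, mapR. destruct Hxy as [H|H]; [left|right];
    apply (in_map (fun a : ratom m => RA (ra_ag a) (f (ra_src a)) (f (ra_tgt a)))) in H; exact H.
  - apply rt_refl.
  - eapply rt_trans; eauto.
Qed.

Record tmpl (m : nat) := Tm { tP : list (sequent m); tC : sequent m; tev : list label;
  tpc : list ('I_m * label * label); tside : Prop }.
Arguments Tm {m}. Arguments tP {m}. Arguments tC {m}. Arguments tev {m}. Arguments tpc {m}. Arguments tside {m}.

Definition valid {m} (T : tmpl m) R G : Prop :=
  tside T /\ (forall e, In e (tev T) -> fresh e (inst (tC T) R G)) /\
  (forall p, In p (tpc T) -> prop_path (fst (fst p)) (fst (tC T) ++ R) (snd (fst p)) (snd p)).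

Definition tmap {m} f (T : tmpl m) : tmpl m :=
  Tm (List.map (mapS f) (tP T)) (mapS f (tC T)) (List.map f (tev T))
     (List.map (fun p => (fst (fst p), f (snd (fst p)), f (snd p))) (tpc T)) (tside T).

Definition is_stit {m} (a : form m) : Prop := match a with Stit _ _ => True | _ => False end.

Definition stitT {m} (i : 'I_m) w v a : tmpl m :=
  Tm [:: ([:: RA i w v], [:: (v, a)])] ([::], [:: (w, Stit i a)]) [:: v] [::] True.
Definition euclT {m} (i : 'I_m) w u v : tmpl m :=
  Tm [:: ([:: RA i w u; RA i w v; RA i u v], [::])] ([:: RA i w u; RA i w v], [::]) [::] [::] True.

Definition goodT {m} n (T : tmpl m) : Prop :=
  (forall f R' G', valid (tmap f T) R' G' ->
      rule m n (List.map (fun A => inst A R' G') (tP (tmap f T))) (inst (tC (tmap f T)) R' G')) /\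
  (forall A, In A (tP T) -> exists X, fst A = fst (tC T) ++ X) /\
  (((forall A, In A (tP T) -> exists Y, snd A = snd (tC T) ++ Y) /\
     (forall y, In y (snd (tC T)) -> ~ is_stit (snd y))) \/
   exists i w v a, T = stitT i w v a) /\
  NoDup (snd (tC T)) /\
  (NoDup (fst (tC T)) \/ exists i w u, T = euclT i w u u) /\
  (tev T = [::] \/ exists e, tev T = [:: e]).

Ltac kept_tac := intros ? HA; simpl in HA;
  repeat (destruct HA as [HA|HA]; [subst; eexists; reflexivity|]); contradiction.
Ltac nostit_tac := intros ? Hy; simpl in Hy;
  repeat (destruct Hy as [Hy|Hy]; [subst; simpl; auto|]); contradiction.
Ltac nodup_tac := repeat constructor; simpl; intros Hc;
  repeat (destruct Hc as [Hc|Hc]; [discriminate|]); contradiction.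

Lemma rule_tmpl m n P C : rule m n P C -> exists T R G, goodT n T /\ valid T R G /\
  P = List.map (fun A => inst A R G) (tP T) /\ C = inst (tC T) R G.
Proof.
  intros Hr. destruct Hr.
  -
    exists (Tm [::] ([::], [:: (w, Var p); (w, NVar p)]) [::] [::] True), R, G.
    split; [|split; [|split; reflexivity]].
    + split; [intros f R' G' _; simpl; apply r_id|].
      split; [kept_tac|]. split; [left; split; [kept_tac|nostit_tac]|].
      split; [nodup_tac|]. split; [left; constructor|left; reflexivity].
    + split; [exact I|split; simpl; tauto].
  -
    exists (Tm [:: ([::], [:: (w,And a b); (w,a)]); ([::], [:: (w,And a b); (w,b)])] ([::], [:: (w, And a b)]) [::] [::] True), R, G.
    split; [|split; [|split; reflexivity]].
    + split; [intros f R' G' _; simpl; apply r_and|].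
      split; [kept_tac|]. split; [left; split; [kept_tac|nostit_tac]|].
      split; [nodup_tac|]. split; [left; constructor|left; reflexivity].
    + split; [exact I|split; simpl; tauto].
  -
    exists (Tm [:: ([::], [:: (w,Or a b); (w,a); (w,b)])] ([::], [:: (w, Or a b)]) [::] [::] True), R, G.
    split; [|split; [|split; reflexivity]].
    + split; [intros f R' G' _; simpl; apply r_or|].
      split; [kept_tac|]. split; [left; split; [kept_tac|nostit_tac]|].
      split; [nodup_tac|]. split; [left; constructor|left; reflexivity].
    + split; [exact I|split; simpl; tauto].
  -
    exists (stitT i w v a), R, G.
    split; [|split; [|split; reflexivity]].
    + split; [intros f R' G' [_ [Hf _]]; simpl; apply r_stit; apply (Hf (f v)); simpl; auto|].
      split; [kept_tac|]. split; [right; exists i, w, v, a; reflexivity|].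
      split; [nodup_tac|]. split; [left; constructor|right; exists v; reflexivity].
    + split; [exact I|split; simpl; [intros e [<-|[]]; exact H|tauto]].
  -
    exists (Tm [:: ([::], [:: (w,Box a); (v,a)])] ([::], [:: (w, Box a)]) [:: v] [::] True), R, G.
    split; [|split; [|split; reflexivity]].
    + split; [intros f R' G' [_ [Hf _]]; simpl; apply r_box; apply (Hf (f v)); simpl; auto|].
      split; [kept_tac|]. split; [left; split; [kept_tac|nostit_tac]|].
      split; [nodup_tac|]. split; [left; constructor|right; exists v; reflexivity].
    + split; [exact I|split; simpl; [intros e [<-|[]]; exact H|tauto]].
  -
    exists (Tm [:: ([::], [:: (w,Dia a); (u,a)])] ([::], [:: (w, Dia a)]) [::] [::] True), R, G.
    split; [|split; [|split; reflexivity]].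
    + split; [intros f R' G' _; simpl; apply r_dia|].
      split; [kept_tac|]. split; [left; split; [kept_tac|nostit_tac]|].
      split; [nodup_tac|]. split; [left; constructor|left; reflexivity].
    + split; [exact I|split; simpl; tauto].
  -
    exists (Tm [:: (List.map (fun i => RA i (u i) v) (enum 'I_m), [::])] ([::], [::]) [:: v] [::] True), R, G.
    split; [|split; [|split; reflexivity]].
    + split.
      { intros f R' G' [_ [Hf _]]. unfold tmap, inst, mapS, mapR, mapG in *. cbn [tP tC tev fst snd app List.map] in *.
        rewrite map_map.
        apply (r_ioa m n R' G' (fun i => f (u i)) (f v)). apply (Hf (f v)); simpl; auto. }
      split; [kept_tac|]. split; [left; split; [kept_tac|nostit_tac]|].
      split; [constructor|]. split; [left; constructor|right; exists v; reflexivity].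
    + split; [exact I|split; simpl; [intros e [<-|[]]; exact H|tauto]].
  -
    exists (Tm [:: ([:: RA i w u], [:: (w,DStit i a); (u,a)])] ([:: RA i w u], [:: (w, DStit i a)]) [::] [::] True), R, G.
    split; [|split; [|split; reflexivity]].
    + split; [intros f R' G' _; simpl; apply r_dstit|].
      split; [kept_tac|]. split; [left; split; [kept_tac|nostit_tac]|].
      split; [nodup_tac|]. split; [left; nodup_tac|left; reflexivity].
    + split; [exact I|split; simpl; tauto].
  -
    exists (Tm [:: ([:: RA i w w], [::])] ([::], [::]) [::] [::] True), R, G.
    split; [|split; [|split; reflexivity]].
    + split; [intros f R' G' _; simpl; apply Defs.r_refl|].
      split; [kept_tac|]. split; [left; split; [kept_tac|nostit_tac]|].
      split; [constructor|]. split; [left; constructor|left; reflexivity].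
    + split; [exact I|split; simpl; tauto].
  -
    exists (euclT i w u v), R, G.
    split; [|split; [|split; reflexivity]].
    + split; [intros f R' G' _; simpl; apply r_eucl|].
      split; [kept_tac|]. split; [left; split; [kept_tac|nostit_tac]|].
      split; [constructor|]. split; [|left; reflexivity].
      destruct (Nat.eq_dec u v) as [<-|Huv]; [right; exists i, w, u; reflexivity|].
      left. constructor; [|constructor; [simpl; tauto|constructor]].
      simpl. intros [Hc|[]]. injection Hc. intros; subst; tauto.
    + split; [exact I|split; simpl; tauto].
  -
    exists (Tm (List.map (fun kj => ([:: RA i (w (fst kj)) (w (snd kj))], [::])) (apc_pairs n)) ([::],[::]) [::] [::] (0 < n)), R, G.
    split; [|split; [|split; [rewrite map_map; reflexivity|reflexivity]]].
    + split.
      { intros f R' G' [Hs _]; simpl. unfold mapS. rewrite !map_map.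
        exact (r_apc m n i R' G' (fun x => f (w x)) Hs). }
      split; [intros A HA; apply in_map_iff in HA; destruct HA as [kj [<- _]]; eexists; reflexivity|].
      split; [left; split; [intros A HA; apply in_map_iff in HA; destruct HA as [kj [<- _]]; eexists; reflexivity|nostit_tac]|].
      split; [constructor|]. split; [left; constructor|left; reflexivity].
    + split; [assumption|split; simpl; tauto].
  -
    exists (Tm [:: ([::], [:: (w, DStit i a); (u, a)])] ([::], [:: (w, DStit i a)]) [::] [:: (i, w, u)] True), R, G.
    split; [|split; [|split; reflexivity]].
    + split; [intros f R' G' [_ [_ Hp]]; simpl; apply r_pr; apply (Hp (i, f w, f u)); simpl; auto|].
      split; [kept_tac|]. split; [left; split; [kept_tac|nostit_tac]|].
      split; [nodup_tac|]. split; [left; constructor|left; reflexivity].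
    + split; [exact I|split; simpl; [tauto|intros p [<-|[]]; exact H]].
Qed.

Arguments rule_tmpl {m n P C}.

Lemma mapS_id {m} (S : sequent m) : mapS (fun x => x) S = S.
Proof. destruct S as [R G]. unfold mapS; simpl. rewrite mapR_id mapG_id. reflexivity. Qed.

Lemma tmap_id {m} (T : tmpl m) : tmap (fun x => x) T = T.
Proof.
  destruct T as [P C E Pc Sd]. unfold tmap; simpl. rewrite mapS_id map_id.
  assert (H1 : List.map (mapS (fun x => x)) P = P).
  { induction P as [|a P IH]; simpl; [reflexivity| rewrite mapS_id IH; reflexivity]. }
  assert (H2 : List.map (fun p : 'I_m * label * label => (fst (fst p), snd (fst p), snd p)) Pc = Pc).
  { induction Pc as [|[[a b] c] Pc IH]; simpl; [reflexivity| rewrite IH; reflexivity]. }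
  rewrite H1 H2. reflexivity.
Qed.

Lemma goodT_rule {m} n (T : tmpl m) R G : goodT n T -> valid T R G ->
  rule m n (List.map (fun A => inst A R G) (tP T)) (inst (tC T) R G).
Proof.
  intros [Hr _] Hv. rewrite -(tmap_id T) in Hv. specialize (Hr _ _ _ Hv). rewrite tmap_id in Hr. exact Hr.
Qed.

Lemma fresh_inst {m} e (A : sequent m) R G : fresh e (inst A R G) -> fresh e A /\ fresh e (R, G).
Proof.
  destruct A as [X Y]. unfold inst, fresh; simpl. intros H. split; intros Hc; apply H; apply labels_app; auto.
Qed.

Lemma valid_tmap {m} (T : tmpl m) Rc Gc f f' R' G' : valid T Rc Gc ->
  mapS f' (tC T) = mapS f (tC T) -> mapR f' Rc = mapR f Rc ->
  (forall e, In e (tev T) -> fresh (f' e) (inst (mapS f (tC T)) (mapR f Rc ++ R') (mapG f Gc ++ G'))) ->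
  valid (tmap f' T) (mapR f Rc ++ R') (mapG f Gc ++ G').
Proof.
  intros [Hs [He Hp]] E1 E2 Hev. split; [exact Hs|split].
  - intros e' Hin. unfold tmap in Hin; simpl in Hin. apply in_map_iff in Hin. destruct Hin as [e [<- Hin]].
    unfold tmap; simpl. rewrite E1. apply Hev. exact Hin.
  - intros p' Hin. unfold tmap in Hin; simpl in Hin. apply in_map_iff in Hin. destruct Hin as [[[i w] u] [<- Hin]].
    simpl. specialize (Hp _ Hin). simpl in Hp. pose proof (@prop_path_map m i _ _ _ f' Hp) as Hp2. clear Hp. rename Hp2 into Hp.
    eapply prop_path_mono; [exact Hp|]. unfold tmap; simpl. rewrite mapR_app E2.
    intros x Hx. rewrite !in_app_iff in Hx |- *. tauto.
Qed.

Arguments valid_tmap {m T Rc Gc f f' R' G'}.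

Lemma adm m n h Sq : der m n h Sq -> forall f R' G', der m n h (mapR f (fst Sq) ++ R', mapG f (snd Sq) ++ G').
Proof.
  intros D. induction D as [h P C Sq Hr He Hp IH]. intros f R' G'.
  destruct (rule_tmpl Hr) as [T [Rc [Gc [Hg [Hv [EP EC]]]]]]. subst P C.
  assert (Hf' : exists f', mapS f' (tC T) = mapS f (tC T) /\ mapR f' Rc = mapR f Rc /\ mapG f' Gc = mapG f Gc /\
     valid (tmap f' T) (mapR f Rc ++ R') (mapG f Gc ++ G')).
  { destruct Hg as [_ [_ [_ [_ [_ Hev]]]]]. destruct Hev as [Hev|[e Hev]].
    - exists f. split; [reflexivity|split; [reflexivity|split; [reflexivity|]]].
      apply (valid_tmap Hv); [reflexivity|reflexivity|]. rewrite Hev. simpl. tauto.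
    - destruct (fresh_ex (labels (inst (mapS f (tC T)) (mapR f Rc ++ R') (mapG f Gc ++ G')))) as [z Hz].
      assert (Hfe : fresh e (inst (tC T) Rc Gc)). { destruct Hv as [_ [He' _]]. apply He'. rewrite Hev. simpl; auto. }
      apply fresh_inst in Hfe. destruct Hfe as [Hf1 Hf2].
      exists (upd f e z).
      assert (E1 : mapS (upd f e z) (tC T) = mapS f (tC T)).
      { destruct (tC T) as [X Y] eqn:EC. unfold mapS; simpl. rewrite (mapR_fresh f e z X Y Hf1) (mapG_fresh f e z X Y Hf1). reflexivity. }
      assert (E2 : mapR (upd f e z) Rc = mapR f Rc) by exact (mapR_fresh f e z Rc Gc Hf2).
      assert (E3 : mapG (upd f e z) Gc = mapG f Gc) by exact (mapG_fresh f e z Rc Gc Hf2).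
      split; [exact E1|split; [exact E2|split; [exact E3|]]].
      apply (valid_tmap Hv E1 E2). rewrite Hev. intros e' [<-|[]]. unfold upd. rewrite Nat.eqb_refl. exact Hz. }
  destruct Hf' as [f' [E1 [E2 [E3 Hv']]]].
  assert (E1r : mapR f' (fst (tC T)) = mapR f (fst (tC T))) by exact (f_equal fst E1).
  assert (E1g : mapG f' (snd (tC T)) = mapG f (snd (tC T))) by exact (f_equal snd E1).
  eapply der_rule.
  - destruct Hg as [Hrule _]. exact (Hrule f' _ _ Hv').
  - destruct He as [H1 H2]. unfold tmap, inst, mapS; simpl. rewrite E1r E1g. split; simpl in *.
    + rewrite app_assoc -mapR_app. apply Permutation_app_tail. apply Permutation_map. exact H1.
    + rewrite app_assoc -mapG_app. apply Permutation_app_tail. apply Permutation_map. exact H2.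
  - intros Q HQ. unfold tmap in HQ; simpl in HQ. rewrite map_map in HQ. apply in_map_iff in HQ.
    destruct HQ as [A [<- HA]].
    specialize (IH (inst A Rc Gc) (in_map _ _ _ HA) f' R' G').
    unfold inst in IH |- *. simpl in IH |- *. rewrite mapR_app mapG_app E2 E3 -!app_assoc in IH. exact IH.
Qed.

Arguments adm {m n h Sq}.

Lemma weaken m n h R G R' G' : der m n h (R, G) -> der m n h (R ++ R', G ++ G').
Proof. intros D. pose proof (adm D (fun x => x) R' G') as H. simpl in H. rewrite mapR_id mapG_id in H. exact H. Qed.

Lemma rename m n h R G : forall f, der m n h (R, G) -> der m n h (mapR f R, mapG f G).
Proof. intros f D. pose proof (adm D f [::] [::]) as H. simpl in H. rewrite !app_nil_r in H. exact H. Qed.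
Arguments rename {m n h R G}. Arguments weaken {m n h R G}.

Lemma perm_split {A} (x : A) l : In x l -> exists l', Permutation l (x :: l').
Proof. intros H. apply in_split in H. destruct H as [l1 [l2 ->]]. exists (l1 ++ l2). apply Permutation_sym, Permutation_middle. Qed.

Arguments perm_split {A x l}.

Lemma perm_cons_cases {A} (y : A) G X Gc : Permutation (y :: G) (X ++ Gc) ->
 (exists G1, Permutation Gc (y :: G1) /\ Permutation G (X ++ G1)) \/
 (exists X1, Permutation X (y :: X1) /\ Permutation G (X1 ++ Gc)).
Proof.
  intros H. assert (Hin : In y (X ++ Gc)) by (eapply Permutation_in; [exact H| left; reflexivity]).
  apply in_app_or in Hin. destruct Hin as [Hin|Hin].
  - right. destruct (perm_split Hin) as [X1 HX]. exists X1. split; [exact HX|].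
    apply Permutation_cons_inv with y. eapply Permutation_trans; [exact H|].
    exact (Permutation_app_tail Gc HX).
  - left. destruct (perm_split Hin) as [G1 HG]. exists G1. split; [exact HG|].
    apply Permutation_cons_inv with y. eapply Permutation_trans; [exact H|].
    eapply Permutation_trans; [apply Permutation_app_head; exact HG|]. apply Permutation_sym, Permutation_middle.
Qed.

Arguments perm_cons_cases {A y G X Gc}.

Lemma perm_two_cases {A} (y : A) G X Gc : Permutation (y :: y :: G) (X ++ Gc) ->
 (exists G2, Permutation Gc (y::y::G2) /\ Permutation G (X ++ G2)) \/
 (exists X1 G1, Permutation X (y::X1) /\ Permutation Gc (y::G1) /\ Permutation G (X1 ++ G1)) \/
 (exists X2, Permutation X (y::y::X2) /\ Permutation G (X2 ++ Gc)).
Proof.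
  intros H. destruct (perm_cons_cases H) as [[G1 [H1 H2]]|[X1 [H1 H2]]].
  - destruct (perm_cons_cases H2) as [[G2 [H3 H4]]|[X2 [H3 H4]]].
    + left. exists G2. split; [|exact H4]. eapply Permutation_trans; [exact H1|]. apply perm_skip; exact H3.
    + right; left. exists X2, G1. auto.
  - destruct (perm_cons_cases H2) as [[G2 [H3 H4]]|[X2 [H3 H4]]].
    + right; left. exists X1, G2. auto.
    + right; right. exists X2. split; [|exact H4]. eapply Permutation_trans; [exact H1|]. apply perm_skip; exact H3.
Qed.

Arguments perm_two_cases {A y G X Gc}.

Lemma valid_mono {m} (T : tmpl m) R G R' G' : valid T R G -> incl (fst (tC T) ++ R) (fst (tC T) ++ R') ->
  (forall l, In l (labels (R', G')) -> In l (labels (R, G)) \/ ~ In l (tev T)) -> valid T R' G'.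
Proof.
  intros [Hs [He Hp]] Hi Hl. split; [exact Hs|split].
  - intros e Hin Hc. unfold inst in Hc. apply labels_app in Hc. destruct Hc as [Hc|Hc].
    + apply (He e Hin). unfold inst. apply labels_app. left; exact Hc.
    + destruct (Hl e Hc) as [Hc'|Hc']; [|exact (Hc' Hin)].
      apply (He e Hin). unfold inst. apply labels_app. right; exact Hc'.
  - intros p Hin. eapply prop_path_mono; [apply Hp; exact Hin| exact Hi].
Qed.

Arguments valid_mono {m T R G R' G'}.

Lemma rename_one m n h (i : 'I_m) w z v a R G : fresh z (R, G) -> w <> z ->
  der m n h (RA i w z :: R, (z, a) :: G) -> der m n h (RA i w v :: R, (v, a) :: G).
Proof.
  intros Hf Hw D. apply (rename (upd (fun x => x) z v)) in D.
  unfold mapR, mapG in D. simpl in D. fold (mapR (m:=m) (upd (fun x => x) z v) R) in D.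
  fold (mapG (m:=m) (upd (fun x => x) z v) G) in D.
  rewrite (mapR_fresh _ _ _ _ _ Hf) (mapG_fresh _ _ _ _ _ Hf) mapR_id mapG_id in D.
  unfold upd in D. rewrite Nat.eqb_refl in D. apply Nat.eqb_neq in Hw. rewrite Hw in D. exact D.
Qed.

Lemma labels_cons_G {m} (R : list (ratom m)) x G l : In l (labels (R, x :: G)) <-> l = fst x \/ In l (labels (R, G)).
Proof. unfold labels; simpl. rewrite !in_app_iff. simpl. intuition congruence. Qed.
Lemma labels_cons_R {m} (R : list (ratom m)) x G l : In l (labels (x :: R, G)) <-> l = ra_src x \/ l = ra_tgt x \/ In l (labels (R, G)).
Proof. unfold labels; simpl. rewrite !in_app_iff. intuition congruence. Qed.

Lemma labels_permG {m} (R : list (ratom m)) G G' l : Permutation G G' -> In l (labels (R, G)) -> In l (labels (R, G')).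
Proof. intros H. apply labels_perm. split; [apply Permutation_refl| exact H]. Qed.
Lemma labels_permR {m} (R R' : list (ratom m)) G l : Permutation R R' -> In l (labels (R, G)) -> In l (labels (R', G)).
Proof. intros H. apply labels_perm. split; [exact H| apply Permutation_refl]. Qed.

Lemma inv_stit m n h : forall R G w (i : 'I_m) a v, fresh v (R, (w, Stit i a) :: G) ->
  der m n h (R, (w, Stit i a) :: G) -> der m n h (RA i w v :: R, (v, a) :: G).
Proof.
  induction h as [|h IHh]; intros R G w i a v Hfv D.
  { destruct (der_pos D) as [? E]; discriminate. }
  inversion D as [h0 P C Sq Hr He Hp E0 E1]. subst h0 Sq.
  destruct (rule_tmpl Hr) as [T [Rc [Gc [Hg [Hv [EP EC]]]]]]. subst P C.
  destruct He as [HR HG]. simpl in HR, HG.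
  destruct (perm_cons_cases HG) as [[G1 [HGc HG1]] | [X1 [HX HG1]]].
  -
    destruct (fresh_ex (labels (R, (w, Stit i a) :: G) ++ tev T ++ flat_map labels (List.map (fun A => inst A Rc Gc) (tP T)))) as [z Hz].
    assert (Hz1 : ~ In z (labels (R, (w, Stit i a) :: G))) by (intros Hc; apply Hz; apply in_app_iff; left; exact Hc).
    assert (Hz2 : ~ In z (tev T)) by (intros Hc; apply Hz; apply in_app_iff; right; apply in_app_iff; left; exact Hc).
    assert (Hz3 : ~ In z (flat_map labels (List.map (fun A => inst A Rc Gc) (tP T)))) by (intros Hc; apply Hz; apply in_app_iff; right; apply in_app_iff; right; exact Hc).
    assert (HwGc : In w (labels (Rc, Gc))).
    { eapply labels_permG; [apply Permutation_sym; exact HGc|]. apply labels_cons_G. left; reflexivity. }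
    assert (Hzw : w <> z). { intros <-. apply Hz1. apply labels_cons_G. left; reflexivity. }
    assert (D' : der m n (S h) (RA i w z :: R, (z, a) :: G)).
    { eapply der_rule with (C := inst (tC T) (RA i w z :: Rc) ((z, a) :: G1)).
      - apply goodT_rule; [exact Hg|]. apply (valid_mono Hv).
        + intros x Hx. rewrite !in_app_iff in Hx |- *. simpl. tauto.
        + intros l Hl. apply labels_cons_R in Hl. simpl in Hl. destruct Hl as [<-|[<-|Hl]]; [left; exact HwGc|right; exact Hz2|].
          apply labels_cons_G in Hl. simpl in Hl. destruct Hl as [<-|Hl]; [right; exact Hz2|].
          left. eapply labels_permG; [apply Permutation_sym; exact HGc|]. apply labels_cons_G. right; exact Hl.
      - unfold inst; split; simpl.
        + eapply Permutation_trans; [apply perm_skip; exact HR|]. apply Permutation_middle.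
        + eapply Permutation_trans; [apply perm_skip; exact HG1|]. apply Permutation_middle.
      - intros Q HQ. apply in_map_iff in HQ. destruct HQ as [A [<- HA]].
        assert (HQ0 : In (inst A Rc Gc) (List.map (fun A => inst A Rc Gc) (tP T))) by (apply (in_map (fun A => inst A Rc Gc)); exact HA).
        assert (E : seq_equiv (inst A Rc Gc) (fst A ++ Rc, (w, Stit i a) :: snd A ++ G1)).
        { unfold inst; split; simpl; [apply Permutation_refl|].
          eapply Permutation_trans; [apply Permutation_app_head; exact HGc|]. apply Permutation_sym, Permutation_middle. }
        assert (Hfz : fresh z (fst A ++ Rc, (w, Stit i a) :: snd A ++ G1)).
        { intros Hc. apply Hz3. apply in_flat_map. exists (inst A Rc Gc). split; [exact HQ0|].
          eapply labels_perm; [|exact Hc]. destruct E as [E1 E2]. split; apply Permutation_sym; assumption. }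
        specialize (IHh _ _ _ _ _ _ Hfz (der_perm (Hp _ HQ0) E)).
        eapply der_perm; [exact IHh|]. unfold inst; split; simpl; apply Permutation_middle. }
    eapply rename_one; [|exact Hzw|exact D'].
    intros Hc. apply Hz1. apply labels_cons_G. right; exact Hc.
  -
    destruct Hg as [_ [_ [Hks _]]].
    destruct Hks as [[_ Hns]|[i' [w' [v' [a' ET]]]]].
    { exfalso. apply (Hns (w, Stit i a)); [|exact I]. eapply Permutation_in; [apply Permutation_sym; exact HX|]. left; reflexivity. }
    subst T. simpl in HX, HR, HG1.
    apply Permutation_length_1_inv in HX. injection HX as Ew Ei Ea EX. subst w' i' a' X1. simpl in HG1.
    destruct Hv as [_ [Hfe _]]. specialize (Hfe v' ltac:(simpl; auto)). simpl in Hfe.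
    assert (Hd : der m n h (RA i w v' :: Rc, (v', a) :: Gc)) by (apply Hp; left; reflexivity).
    assert (H1 : fresh v' (Rc, Gc)) by (intros Hc; apply Hfe; apply labels_cons_G; right; exact Hc).
    assert (H2 : w <> v') by (intros <-; apply Hfe; apply labels_cons_G; left; reflexivity).
    pose proof (rename_one m n h i w v' v a Rc Gc H1 H2 Hd) as Hd'.
    eapply der_mono; [eapply der_perm; [exact Hd'|]|lia]. split; simpl; apply perm_skip, Permutation_sym; assumption.
Qed.

Lemma nodup_two {A} (y : A) X X2 : NoDup X -> Permutation X (y :: y :: X2) -> False.
Proof.
  intros Hn Hp. apply (Permutation_NoDup Hp) in Hn. inversion Hn as [|? ? Hni _]. apply Hni. left; reflexivity.
Qed.

Arguments nodup_two {A y X X2}.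

Lemma in_perm {A} (x : A) l l' : Permutation l l' -> In x l' -> In x l.
Proof. intros H Hx. eapply Permutation_in; [apply Permutation_sym; exact H| exact Hx]. Qed.

Lemma ctr m n h : (forall R al G, der m n h (al :: al :: R, G) -> der m n h (al :: R, G)) /\
                  (forall R y G, der m n h (R, y :: y :: G) -> der m n h (R, y :: G)).
Proof.
  induction h as [|h [cR cF]].
  { split; intros ? ? ? D; destruct (der_pos D) as [? E]; discriminate. }
  split.
  - intros R al G D. inversion D as [h0 P C Sq Hr He Hp E0 E1]; subst h0 Sq.
    destruct (rule_tmpl Hr) as [T [Rc [Gc [Hg [Hv [EP EC]]]]]]. subst P C.
    pose proof Hg as Hg'. destruct Hg' as [_ [Hkf [Hks [Hnd2 [Hnd1 _]]]]].
    destruct He as [HR HG]. simpl in HR, HG.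
    destruct (perm_two_cases HR) as [[R2 [HRc HR2]] | [[X1 [R1 [HX [HRc HR1]]]] | [X2 [HX HR2]]]].
    + eapply der_rule with (C := inst (tC T) (al :: R2) Gc).
      * apply goodT_rule; [exact Hg|]. apply (valid_mono Hv).
        -- intros x Hx. rewrite !in_app_iff in Hx |- *. destruct Hx as [Hx|Hx]; [left; exact Hx|right].
           apply (Permutation_in _ HRc) in Hx. simpl in Hx |- *. tauto.
        -- intros l Hl. left. eapply labels_permR; [apply Permutation_sym; exact HRc|].
           apply labels_cons_R in Hl. apply labels_cons_R. right; right. apply labels_cons_R. exact Hl.
      * unfold inst; split; simpl; [|exact HG].
        eapply Permutation_trans; [apply perm_skip; exact HR2|]. apply Permutation_middle.
      * intros Q HQ. apply in_map_iff in HQ. destruct HQ as [A [<- HA]].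
        assert (HQ0 : In (inst A Rc Gc) (List.map (fun A => inst A Rc Gc) (tP T))) by (apply (in_map (fun A => inst A Rc Gc)); exact HA).
        eapply der_perm; [apply (cR (fst A ++ R2) al (snd A ++ Gc)); eapply der_perm; [exact (Hp _ HQ0)|]|].
        -- unfold inst; split; simpl; [|apply Permutation_refl].
           eapply Permutation_trans; [apply Permutation_app_head; exact HRc|]. perm_solve.
        -- unfold inst; split; simpl; [perm_solve|apply Permutation_refl].
    + eapply der_rule with (C := inst (tC T) R1 Gc).
      * apply goodT_rule; [exact Hg|]. apply (valid_mono Hv).
        -- intros x Hx. rewrite !in_app_iff in Hx |- *. destruct Hx as [Hx|Hx]; [left; exact Hx|].
           apply (Permutation_in _ HRc) in Hx. destruct Hx as [<-|Hx]; [left|right; exact Hx].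
           eapply in_perm; [exact HX| left; reflexivity].
        -- intros l Hl. left. eapply labels_permR; [apply Permutation_sym; exact HRc|].
           apply labels_cons_R. simpl. tauto.
      * unfold inst; split; simpl; [|exact HG].
        eapply Permutation_trans; [apply perm_skip; exact HR1|].
        apply Permutation_sym. exact (Permutation_app_tail R1 HX).
      * intros Q HQ. apply in_map_iff in HQ. destruct HQ as [A [<- HA]].
        assert (HQ0 : In (inst A Rc Gc) (List.map (fun A => inst A Rc Gc) (tP T))) by (apply (in_map (fun A => inst A Rc Gc)); exact HA).
        destruct (Hkf A HA) as [Y EY].
        eapply der_perm; [apply (cR (X1 ++ Y ++ R1) al (snd A ++ Gc)); eapply der_perm; [exact (Hp _ HQ0)|]|].
        -- unfold inst; split; simpl; [|apply Permutation_refl]. rewrite EY.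
           apply (Permutation_trans (l' := ((al :: X1) ++ Y) ++ al :: R1)); [apply Permutation_app; [apply Permutation_app_tail; exact HX| exact HRc]|]. perm_solve.
        -- unfold inst; split; simpl; [|apply Permutation_refl]. rewrite EY.
           apply (Permutation_trans (l' := ((al :: X1) ++ Y) ++ R1)); [perm_solve|apply Permutation_app_tail; apply Permutation_app_tail; apply Permutation_sym; exact HX].
    + destruct Hnd1 as [Hnd1|[i [w [u ET]]]]; [exfalso; exact (nodup_two Hnd1 HX)|].
      subst T. simpl in HX, HR2, HG.
      assert (Hal : al = RA i w u). { assert (Hin : In al [:: RA i w u; RA i w u]) by (eapply in_perm; [exact HX|left; reflexivity]). simpl in Hin. destruct Hin as [<-|[<-|[]]]; reflexivity. }
      subst al.
      assert (Hd : der m n h (RA i w u :: RA i w u :: RA i u u :: Rc, Gc)) by (apply Hp; simpl; left; reflexivity).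
      apply cR in Hd.
      assert (HX2 : X2 = [::]). { apply Permutation_length in HX. simpl in HX. destruct X2; [reflexivity|discriminate]. }
      subst X2. simpl in HR2.
      eapply step_rule; [apply (Defs.r_refl m n i (RA i w u :: Rc) u Gc)| |].
      * split; simpl; [apply perm_skip; exact HR2|exact HG].
      * intros Q [<-|[]]. eapply der_perm; [exact Hd|]. split; simpl; [apply perm_swap|apply Permutation_refl].
  - intros R y G D. inversion D as [h0 P C Sq Hr He Hp E0 E1]; subst h0 Sq.
    destruct (rule_tmpl Hr) as [T [Rc [Gc [Hg [Hv [EP EC]]]]]]. subst P C.
    pose proof Hg as Hg'. destruct Hg' as [_ [Hkf [Hks [Hnd2 [Hnd1 _]]]]].
    destruct He as [HR HG]. simpl in HR, HG.
    destruct (perm_two_cases HG) as [[G2 [HGc HG2]] | [[Y1 [G1 [HY [HGc HG1]]]] | [Y2 [HY HG2]]]].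
    + eapply der_rule with (C := inst (tC T) Rc (y :: G2)).
      * apply goodT_rule; [exact Hg|]. apply (valid_mono Hv).
        -- intros x Hx. exact Hx.
        -- intros l Hl. left. eapply labels_permG; [apply Permutation_sym; exact HGc|].
           apply labels_cons_G in Hl. destruct Hl as [Hl|Hl]; apply labels_cons_G; [left; exact Hl|right; apply labels_cons_G; right; exact Hl].
      * unfold inst; split; simpl; [exact HR|].
        eapply Permutation_trans; [apply perm_skip; exact HG2|]. apply Permutation_middle.
      * intros Q HQ. apply in_map_iff in HQ. destruct HQ as [A [<- HA]].
        assert (HQ0 : In (inst A Rc Gc) (List.map (fun A => inst A Rc Gc) (tP T))) by (apply (in_map (fun A => inst A Rc Gc)); exact HA).
        eapply der_perm; [apply (cF (fst A ++ Rc) y (snd A ++ G2)); eapply der_perm; [exact (Hp _ HQ0)|]|].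
        -- unfold inst; split; simpl; [apply Permutation_refl|].
           eapply Permutation_trans; [apply Permutation_app_head; exact HGc|]. perm_solve.
        -- unfold inst; split; simpl; [apply Permutation_refl|perm_solve].
    + destruct Hks as [[Hks _]|[i [w [v [a ET]]]]].
      * eapply der_rule with (C := inst (tC T) Rc G1).
        -- apply goodT_rule; [exact Hg|]. apply (valid_mono Hv).
           ++ intros x Hx. exact Hx.
           ++ intros l Hl. left. eapply labels_permG; [apply Permutation_sym; exact HGc|].
              apply labels_cons_G. tauto.
        -- unfold inst; split; simpl; [exact HR|].
           eapply Permutation_trans; [apply perm_skip; exact HG1|].
           apply Permutation_sym. exact (Permutation_app_tail G1 HY).
        -- intros Q HQ. apply in_map_iff in HQ. destruct HQ as [A [<- HA]].
           assert (HQ0 : In (inst A Rc Gc) (List.map (fun A => inst A Rc Gc) (tP T))) by (apply (in_map (fun A => inst A Rc Gc)); exact HA).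
           destruct (Hks A HA) as [Z EZ].
           eapply der_perm; [apply (cF (fst A ++ Rc) y (Y1 ++ Z ++ G1)); eapply der_perm; [exact (Hp _ HQ0)|]|].
           ++ unfold inst; split; simpl; [apply Permutation_refl|]. rewrite EZ.
              apply (Permutation_trans (l' := ((y :: Y1) ++ Z) ++ y :: G1)); [apply Permutation_app; [apply Permutation_app_tail; exact HY| exact HGc]|]. perm_solve.
           ++ unfold inst; split; simpl; [apply Permutation_refl|]. rewrite EZ.
              apply (Permutation_trans (l' := ((y :: Y1) ++ Z) ++ G1)); [perm_solve|apply Permutation_app_tail; apply Permutation_app_tail; apply Permutation_sym; exact HY].
      * subst T. simpl in HY, HR, HG1, Hv, Hp.
        apply Permutation_length_1_inv in HY. injection HY as Ey EY1. subst y Y1. simpl in HG1.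
        destruct Hv as [_ [Hfe _]]. specialize (Hfe v ltac:(simpl; auto)). simpl in Hfe.
        assert (Hd : der m n h (RA i w v :: Rc, (v, a) :: Gc)) by (apply Hp; left; reflexivity).
        set (Q1 := (RA i w v :: Rc, (w, Stit i a) :: (v, a) :: G1)).
        assert (Hd1 : der m n h Q1).
        { eapply der_perm; [exact Hd|]. split; simpl; [apply Permutation_refl|].
          eapply Permutation_trans; [apply perm_skip; exact HGc|]. apply perm_swap. }
        destruct (fresh_ex (labels Q1)) as [v2 Hv2].
        assert (Hd2 := inv_stit m n h _ _ _ _ _ _ Hv2 Hd1).
        assert (Hf2 : fresh v2 (RA i w v :: Rc, (v, a) :: G1)).
        { intros Hc. apply Hv2. unfold Q1. apply labels_cons_R in Hc. apply labels_cons_R.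
          destruct Hc as [Hc|[Hc|Hc]]; [tauto|tauto|]. right; right. apply labels_cons_G. right. exact Hc. }
        assert (Hw2 : w <> v2).
        { intros <-. apply Hv2. unfold Q1. apply labels_cons_R. right; right. apply labels_cons_G. left; reflexivity. }
        pose proof (rename_one m n h i w v2 v a _ _ Hf2 Hw2 Hd2) as Hd3.
        apply cR in Hd3. apply cF in Hd3.
        eapply step_rule; [apply (r_stit m n i Rc w v a G1)| |].
        -- intros Hc. apply Hfe. apply labels_cons_G. apply labels_cons_G in Hc. destruct Hc as [Hc|Hc]; [left; exact Hc|right].
           eapply labels_permG; [apply Permutation_sym; exact HGc|]. apply labels_cons_G. right; exact Hc.
        -- split; simpl; [exact HR|apply perm_skip; exact HG1].
        -- intros Q [<-|[]]. exact Hd3.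
    + exfalso. exact (nodup_two Hnd2 HY).
Qed.

Ltac close_ih Ha := eapply der_perm; [eapply der_mono; [exact Ha|lia]| split; simpl; perm_solve].

Lemma gen_id m n (phi : form m) : forall R w G, exists h, der m n h (R, (w, phi) :: (w, neg phi) :: G).
Proof.
  induction phi as [p|p|a IHa b IHb|a IHa b IHb|a IHa|a IHa|i a IHa|i a IHa]; intros R w G; simpl.
  - exists 1. eapply step_rule; [apply (r_id m n R w p G)|split; simpl; perm_solve|intros Q []].
  - exists 1. eapply step_rule; [apply (r_id m n R w p G)|split; simpl; perm_solve|intros Q []].
  - destruct (IHa R w ((w, And a b) :: (w, Or (neg a) (neg b)) :: (w, neg b) :: G)) as [ha Ha].
    destruct (IHb R w ((w, And a b) :: (w, Or (neg a) (neg b)) :: (w, neg a) :: G)) as [hb Hb].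
    exists (S (S (Nat.max ha hb))).
    eapply step_rule; [apply (r_or m n R w (neg a) (neg b) ((w, And a b) :: G))|split; simpl; perm_solve|].
    intros Q [<-|[]].
    eapply step_rule; [apply (r_and m n R w a b ((w, Or (neg a) (neg b)) :: (w, neg a) :: (w, neg b) :: G))|split; simpl; perm_solve|].
    intros Q [<-|[<-|[]]]; [close_ih Ha|close_ih Hb].
  - destruct (IHa R w ((w, Or a b) :: (w, And (neg a) (neg b)) :: (w, b) :: G)) as [ha Ha].
    destruct (IHb R w ((w, Or a b) :: (w, And (neg a) (neg b)) :: (w, a) :: G)) as [hb Hb].
    exists (S (S (Nat.max ha hb))).
    eapply step_rule; [apply (r_or m n R w a b ((w, And (neg a) (neg b)) :: G))|split; simpl; perm_solve|].
    intros Q [<-|[]].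
    eapply step_rule; [apply (r_and m n R w (neg a) (neg b) ((w, Or a b) :: (w, a) :: (w, b) :: G))|split; simpl; perm_solve|].
    intros Q [<-|[<-|[]]]; [close_ih Ha|close_ih Hb].
  - destruct (fresh_ex (labels (R, (w, Box a) :: (w, Dia (neg a)) :: G))) as [v Hv].
    destruct (IHa R v ((w, Dia (neg a)) :: (w, Box a) :: G)) as [ha Ha].
    exists (S (S ha)).
    eapply step_rule; [apply (r_box m n R w v a ((w, Dia (neg a)) :: G)); exact Hv|split; simpl; perm_solve|].
    intros Q [<-|[]].
    eapply step_rule; [apply (r_dia m n R w v (neg a) ((w, Box a) :: (v, a) :: G))|split; simpl; perm_solve|].
    intros Q [<-|[]]. close_ih Ha.
  - destruct (fresh_ex (labels (R, (w, Box (neg a)) :: (w, Dia a) :: G))) as [v Hv].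
    destruct (IHa R v ((w, Dia a) :: (w, Box (neg a)) :: G)) as [ha Ha].
    exists (S (S ha)).
    eapply step_rule; [apply (r_box m n R w v (neg a) ((w, Dia a) :: G)); exact Hv|split; simpl; perm_solve|].
    intros Q [<-|[]].
    eapply step_rule; [apply (r_dia m n R w v a ((w, Box (neg a)) :: (v, neg a) :: G))|split; simpl; perm_solve|].
    intros Q [<-|[]]. close_ih Ha.
  - destruct (fresh_ex (labels (R, (w, Stit i a) :: (w, DStit i (neg a)) :: G))) as [v Hv].
    destruct (IHa (RA i w v :: R) v ((w, DStit i (neg a)) :: G)) as [ha Ha].
    exists (S (S ha)).
    eapply step_rule; [apply (r_stit m n i R w v a ((w, DStit i (neg a)) :: G)); exact Hv|split; simpl; perm_solve|].
    intros Q [<-|[]].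
    eapply step_rule; [apply (r_dstit m n i R w v (neg a) ((v, a) :: G))|split; simpl; perm_solve|].
    intros Q [<-|[]]. close_ih Ha.
  - destruct (fresh_ex (labels (R, (w, Stit i (neg a)) :: (w, DStit i a) :: G))) as [v Hv].
    destruct (IHa (RA i w v :: R) v ((w, DStit i a) :: G)) as [ha Ha].
    exists (S (S ha)).
    eapply step_rule; [apply (r_stit m n i R w v (neg a) ((w, DStit i a) :: G)); exact Hv|split; simpl; perm_solve|].
    intros Q [<-|[]].
    eapply step_rule; [apply (r_dstit m n i R w v a ((v, neg a) :: G))|split; simpl; perm_solve|].
    intros Q [<-|[]]. close_ih Ha.
Qed.

Theorem lemma1 (m n : nat) (Hm : 1 <= m) :
  (* (i) generalized initial sequents *)
  (forall (R : list (ratom m)) (w : label) (phi : form m) (G : list (lform m)),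
      exists h, der m n h (R, (w, phi) :: (w, neg phi) :: G))
  (* (ii) height-preserving admissibility of label substitution *)
  /\ (forall h (S : sequent m) (x y : label),
      der m n h S -> der m n h (subst_seq y x S))
  (* (iii) height-preserving invertibility of all rules *)
  /\ (forall h (P : list (sequent m)) (C : sequent m),
      rule m n P C -> der m n h C -> forall Q, In Q P -> der m n h Q)
  (* (iv) hp-admissibility of weakening and of contraction *)
  /\ (forall h R R' G G',
      der m n h (R, G) -> der m n h (R ++ R', G' ++ G))
  /\ (forall h R R' G,
      der m n h (R ++ R' ++ R', G) -> der m n h (R ++ R', G))
  /\ (forall h R G G',
      der m n h (R, G' ++ G' ++ G) -> der m n h (R, G' ++ G)).
Proof.
  split; [intros R w phi G; apply gen_id|].
  split.
  { intros h S x y D. pose proof (adm D (subst_label y x) [::] [::]) as H. rewrite !app_nil_r in H. exact H. }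
  split.
  { intros h P C Hr D Q HQ.
    destruct (rule_tmpl Hr) as [T [R [G [Hg [Hv [EP EC]]]]]]. subst P C.
    destruct Hg as [_ [Hkf [Hks _]]].
    apply in_map_iff in HQ. destruct HQ as [A [<- HA]].
    destruct Hks as [[Hks _]|[i [w [v [a ET]]]]].
    - destruct (Hkf A HA) as [X EX]. destruct (Hks A HA) as [Y EY].
      apply (fun D => weaken X Y D) in D.
      eapply der_perm; [exact D|]. unfold inst. rewrite EX EY. split; simpl; perm_solve.
    - subst T. simpl in HA. destruct HA as [<-|[]].
      destruct Hv as [_ [Hfe _]]. specialize (Hfe v ltac:(simpl; auto)).
      unfold inst in *. simpl in *. apply inv_stit; assumption. }
  split.
  { intros h R R' G G' D. apply (fun D => weaken R' G' D) in D.
    eapply der_perm; [exact D|]. split; simpl; perm_solve. }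
  split.
  { intros h R R' G. revert R. induction R' as [|al R' IH]; intros R D; [exact D|].
    assert (D1 : der m n h (al :: al :: (R ++ R' ++ R'), G)) by (eapply der_perm; [exact D|split; simpl; perm_solve]).
    apply (proj1 (ctr m n h)) in D1.
    assert (D2 : der m n h ((R ++ [:: al]) ++ R' ++ R', G)) by (eapply der_perm; [exact D1|split; simpl; perm_solve]).
    apply IH in D2. eapply der_perm; [exact D2|split; simpl; perm_solve]. }
  { intros h R G G'. revert G. induction G' as [|y G' IH]; intros G D; [exact D|].
    assert (D1 : der m n h (R, y :: y :: (G' ++ G' ++ G))) by (eapply der_perm; [exact D|split; simpl; perm_solve]).
    apply (proj2 (ctr m n h)) in D1.
    assert (D2 : der m n h (R, G' ++ G' ++ (y :: G))) by (eapply der_perm; [exact D1|split; simpl; perm_solve]).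
    apply IH in D2. eapply der_perm; [exact D2|split; simpl; perm_solve]. }
Qed.
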